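(* Let $(s_n)$ be a sequence of nonnegative reals and $D\in\mathbb{N}\setminus\{0\}$ with $s_n\leq D$ for all $n$. Let $(\alpha_n)\subset\,]0,1[$, $(r_n),(v_n)\subset\mathbb{R}$, $(\gamma_n)\subset[0,\infty)$, and let ${\rm A'}:\mathbb{N}\times\mathbb{N}\to\mathbb{N}$ be monotone in both variables with $\prod_{i=m}^{{\rm A'}(m,k)}(1-\alpha_i)\leq\frac{1}{k+1}$ for all $k,m\in\mathbb{N}$. Let $k,n,p\in\mathbb{N}$ and assume (i) $\forall m\in[n,p]\ \big(v_m\leq\frac{1}{4(k+1)(p+1)}\ \wedge\ r_m\leq\frac{1}{4(k+1)}\big)$; (ii) $\forall m\in\mathbb{N}\ \big(\sum_{i=n}^{n+m}\gamma_i\leq\frac{1}{4(k+1)}\big)$; (iii) $\forall m\in\mathbb{N}\ \big(s_{m+1}\leq(1-\alpha_m)(s_m+v_m)+\alpha_m r_m+\gamma_m\big)$. Then $s_m\leq\frac{1}{k+1}$ for all $m\in[\sigma_2(k,n),p]$, where $\sigma_2(k,n):={\rm A'}\big(n,4D(k+1)-1\big)+1$.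
   Context: ${\rm A'}$ monotone in both variables means: $k\leq k'$ and $m\leq m'$ imply ${\rm A'}(m,k)\leq{\rm A'}(m',k')$. $[a,b]$ denotes the set of natural numbers $m$ with $a\leq m\leq b$. *)

(* Defs.v *)
From Stdlib Require Import Reals Lra Lia List.
Import ListNotations.
Open Scope R_scope.

(* sum_{i=a}^{b} f i  (empty sum = 0 when b < a) *)
Definition sum_range (f : nat -> R) (a b : nat) : R :=
  fold_right Rplus 0 (map f (seq a (S b - a))).

(* prod_{i=a}^{b} f i  (empty product = 1 when b < a) *)
Definition prod_range (f : nat -> R) (a b : nat) : R :=
  fold_right Rmult 1 (map f (seq a (S b - a))).

(* Main.v *)
Require Import Defs.
From Stdlib Require Import Reals Lra Lia List.
Open Scope R_scope.

Lemma fr_mult_a (l : list R) (a : R) : fold_right Rmult a l = fold_right Rmult 1 l * a.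
Proof. induction l; simpl; [ring| rewrite IHl; ring]. Qed.
Lemma fr_plus_a (l : list R) (a : R) : fold_right Rplus a l = fold_right Rplus 0 l + a.
Proof. induction l; simpl; [ring| rewrite IHl; ring]. Qed.

Definition Pp (f : nat -> R) n t := fold_right Rmult 1 (map f (seq n t)).
Definition Gg (f : nat -> R) n t := fold_right Rplus 0 (map f (seq n t)).

Lemma Pp_S f n t : Pp f n (S t) = Pp f n t * f (n + t)%nat.
Proof. unfold Pp. rewrite seq_S, map_app, fold_right_app. simpl. rewrite fr_mult_a. ring. Qed.
Lemma Gg_S f n t : Gg f n (S t) = Gg f n t + f (n + t)%nat.
Proof. unfold Gg. rewrite seq_S, map_app, fold_right_app. simpl. rewrite fr_plus_a. ring. Qed.

Lemma prod_Pp f n u : prod_range f n (n + u) = Pp f n (S u).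
Proof. unfold prod_range, Pp. f_equal. f_equal. f_equal. lia. Qed.
Lemma sum_Gg f n u : sum_range f n (n + u) = Gg f n (S u).
Proof. unfold sum_range, Gg. f_equal. f_equal. f_equal. lia. Qed.

Theorem mainTheorem6
  (s : nat -> R) (D : nat)
  (alpha r v gamma : nat -> R)
  (A' : nat -> nat -> nat)
  (k n p : nat)
  (Hs_nonneg : forall m, 0 <= s m)
  (HD_pos : (0 < D)%nat)
  (Hs_bound : forall m, s m <= INR D)
  (Halpha : forall m, 0 < alpha m < 1)
  (Hgamma : forall m, 0 <= gamma m)
  (HA_mono : forall m m' j j', (m <= m')%nat -> (j <= j')%nat -> (A' m j <= A' m' j')%nat)
  (HA_rate : forall j m, prod_range (fun i => 1 - alpha i) m (A' m j) <= 1 / (INR j + 1))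
  (Hi : forall m, (n <= m <= p)%nat ->
        v m <= 1 / (4 * (INR k + 1) * (INR p + 1)) /\ r m <= 1 / (4 * (INR k + 1)))
  (Hii : forall m, sum_range gamma n (n + m) <= 1 / (4 * (INR k + 1)))
  (Hiii : forall m, s (S m) <= (1 - alpha m) * (s m + v m) + alpha m * r m + gamma m) :
  forall m, (A' n (4 * D * (k + 1) - 1) + 1 <= m <= p)%nat -> s m <= 1 / (INR k + 1).
Proof.
  intros m Hm.
  set (f := fun i => 1 - alpha i).
  set (c := INR k + 1).
  assert (Hc : 0 < c) by (unfold c; pose proof (pos_INR k); lra).
  set (R0 := 1 / (4 * c)).
  set (V := 1 / (4 * c * (INR p + 1))).
  assert (HR0 : 0 <= R0) by (unfold R0; apply Rlt_le, Rdiv_lt_0_compat; lra).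
  assert (Hp1 : 0 < INR p + 1) by (pose proof (pos_INR p); lra).
  assert (HV : 0 <= V) by (unfold V; apply Rlt_le, Rdiv_lt_0_compat; nra).
  assert (HP : forall t, 0 <= Pp f n t <= 1).
  { induction t. unfold Pp; simpl; lra. rewrite Pp_S. replace (f (n+t)%nat) with (1 - alpha (n+t)%nat) by reflexivity.
    pose proof (Halpha (n+t)%nat). split.
    apply Rmult_le_pos; lra.
    apply Rle_trans with (Pp f n t * 1). apply Rmult_le_compat_l; lra. lra. }
  assert (HPdec : forall t t', (t <= t')%nat -> Pp f n t' <= Pp f n t).
  { intros t t' H. induction H. lra. rewrite Pp_S. replace (f (n+m0)%nat) with (1 - alpha (n+m0)%nat) by reflexivity.
    pose proof (Halpha (n+m0)%nat). pose proof (HP m0).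
    apply Rle_trans with (Pp f n m0 * 1). apply Rmult_le_compat_l; lra. lra. }
  assert (HG : forall t, 0 <= Gg gamma n t).
  { induction t. unfold Gg; simpl; lra. rewrite Gg_S. pose proof (Hgamma (n+t)%nat). lra. }
  assert (Hind : forall t, (n + t <= p)%nat ->
     s (n + t)%nat <= Pp f n t * s n + (1 - Pp f n t) * R0 + INR t * V + Gg gamma n t).
  { induction t; intros Ht.
    - unfold Pp, Gg; simpl. rewrite Nat.add_0_r. lra.
    - rewrite Pp_S, Gg_S, S_INR. replace (n + S t)%nat with (S (n + t)) by lia.
      specialize (IHt ltac:(lia)).
      destruct (Hi (n + t)%nat ltac:(lia)) as [Hv Hr].
      fold c in Hv, Hr. fold V in Hv. fold R0 in Hr.
      pose proof (Hiii (n+t)%nat) as H3.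
      pose proof (Halpha (n+t)%nat) as Ha.
      pose proof (HP t). pose proof (HG t). pose proof (pos_INR t).
      replace (f (n+t)%nat) with (1 - alpha (n+t)%nat) by reflexivity.
      set (a := alpha (n+t)%nat) in *.
      set (B := Pp f n t * s n + (1 - Pp f n t) * R0 + INR t * V + Gg gamma n t) in IHt.
      assert (E1 : (1 - a) * s (n+t)%nat <= (1 - a) * B) by (apply Rmult_le_compat_l; lra).
      assert (E2 : (1 - a) * v (n+t)%nat <= (1 - a) * V) by (apply Rmult_le_compat_l; lra).
      assert (E3 : a * r (n+t)%nat <= a * R0) by (apply Rmult_le_compat_l; lra).
      assert (E4 : 0 <= a * (INR t * V)) by (apply Rmult_le_pos; [lra| apply Rmult_le_pos; lra]).
      assert (E5 : 0 <= a * Gg gamma n t) by (apply Rmult_le_pos; lra).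
      assert (E6 : 0 <= (1-a) * V) by (apply Rmult_le_pos; lra).
      unfold B in E1. nra. }
  set (K := (4 * D * (k + 1) - 1)%nat) in *.
  assert (HK : INR K + 1 = 4 * INR D * c).
  { unfold c. rewrite <- S_INR. replace (S K) with (4 * D * (k+1))%nat by (unfold K; lia).
    rewrite !mult_INR, plus_INR. simpl. ring. }
  assert (HD1 : 1 <= INR D) by (apply (le_INR 1); lia).
  assert (HAn : (n <= A' n K)%nat).
  { destruct (Nat.le_gt_cases n (A' n K)) as [h|h]; auto.
    pose proof (HA_rate K n) as H. unfold prod_range in H.
    replace (S (A' n K) - n)%nat with 0%nat in H by lia. simpl in H.
    rewrite HK in H. exfalso.
    assert (1 < 4 * INR D * c) by (pose proof (pos_INR k); unfold c; nra).
    assert (1 / (4*INR D*c) < 1).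
    { apply (Rmult_lt_reg_r (4*INR D*c)); [lra|]. unfold Rdiv.
      rewrite Rmult_assoc, Rinv_l by lra; lra. }
    lra. }
  destruct (Nat.le_exists_sub n (A' n K) HAn) as [u [Hu _]].
  rewrite Nat.add_comm in Hu.
  pose proof (HA_rate K n) as Hrate. rewrite Hu, prod_Pp, HK in Hrate. fold f in Hrate.
  destruct (Nat.le_exists_sub n m ltac:(lia)) as [t [Ht _]].
  rewrite Nat.add_comm in Ht. subst m.
  specialize (Hind t ltac:(lia)).
  assert (P1 : Pp f n t * s n <= R0).
  { pose proof (HPdec (S u) t ltac:(lia)). pose proof (HP t). pose proof (Hs_nonneg n).
    pose proof (Hs_bound n).
    apply Rle_trans with (1 / (4 * INR D * c) * INR D).
    { apply Rle_trans with (Pp f n t * INR D). apply Rmult_le_compat_l; lra.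
      apply Rmult_le_compat_r; lra. }
    unfold R0. right. field. lra. }
  assert (P2 : INR t * V <= R0).
  { assert (INR t <= INR p + 1) by (pose proof (le_INR t p ltac:(lia)); lra).
    apply Rle_trans with ((INR p + 1) * V). apply Rmult_le_compat_r; lra.
    unfold V, R0. right. field. lra. }
  assert (P3 : Gg gamma n t <= R0).
  { destruct t. lia. pose proof (Hii t). rewrite sum_Gg in H. exact H. }
  pose proof (HP t).
  assert (P4 : (1 - Pp f n t) * R0 <= R0) by nra.
  apply Rle_trans with (4 * R0). lra. unfold R0. right. field. lra.
Qed.
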